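(* Let $G$ be a group, $H$ a finite index normal subgroup of $G$, $K$ a normal subgroup of $G$, and $g\in H$. Suppose $g$ has a minimal root $a$ in $G$ with respect to $K$, and let $\psi:G\to G/H$ be the quotient map. Then \[\nu(g;H,K\cap H)\ge \frac{\nu(g;G,K)}{o(\psi(a),G/H)}.\]
   Context: For a group $G$, a normal subgroup $K$ and $g\in G$, with $\pi:G\to G/K$ the quotient map: if $g\in K$, $\nu(g;G,K)$ is the supremum of the orders $o(\pi(a),G/K)$ over all $a\in G$ with $a^n=g$ for some integer $n$; if $g\notin K$, $\nu(g;G,K)$ is the supremum of all non-zero integers $n$ such that $g=a^n$ for some $a\in G$. When $\nu(g;G,K)$ is finite, a minimal root of $g$ in $G$ with respect to $K$ is an element $a\in G$ attaining this supremum (i.e. $a^n=g$ for some $n$ and $o(\pi(a),G/K)=\nu(g;G,K)$ if $g\in K$; $a^{\nu(g;G,K)}=g$ if $g\notin K$). $\nu(g;H,K\cap H)$ is defined in the same way inside $H$. $o(x,Q)$ denotes the order of $x$ in the group $Q$. *)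

(* Defs.v *)
From Stdlib Require Import Reals ZArith Arith List.

Record group := Group {
  carrier :> Type;
  gmul : carrier -> carrier -> carrier;
  gone : carrier;
  ginv : carrier -> carrier;
  gmulA : forall x y z, gmul x (gmul y z) = gmul (gmul x y) z;
  gmul1l : forall x, gmul gone x = x;
  gmulVl : forall x, gmul (ginv x) x = gone
}.

Section Defs.
Variable G : group.

Fixpoint gpow (a : G) (n : nat) : G :=
  match n with O => gone G | S n' => gmul G a (gpow a n') end.

Definition gzpow (a : G) (n : Z) : G :=
  match n with
  | Z0 => gone G
  | Zpos p => gpow a (Pos.to_nat p)
  | Zneg p => ginv G (gpow a (Pos.to_nat p))
  end.

Definition is_subgroup (H : G -> Prop) : Prop :=
  H (gone G) /\ (forall x y, H x -> H y -> H (gmul G x y)) /\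
  (forall x, H x -> H (ginv G x)).

Definition is_normal_in (P N : G -> Prop) : Prop :=
  is_subgroup N /\ (forall x, N x -> P x) /\
  (forall x y, N x -> P y -> N (gmul G (ginv G y) (gmul G x y))).

Definition finite_index (H : G -> Prop) : Prop :=
  exists l : list G, forall x, exists r, In r l /\ H (gmul G (ginv G r) x).

(* o(pi(a), P/N) = k (finite), where pi : P -> P/N: the least k > 0 with a^k in N *)
Definition is_qorder (N : G -> Prop) (a : G) (k : nat) : Prop :=
  (0 < k)%nat /\ N (gpow a k) /\ (forall j, (0 < j < k)%nat -> ~ N (gpow a j)).

(* nu(g; P, N) is finite and equal to m (the supremum is then a maximum).
   If nu(g;P,N) is infinite, there is no m with nu_fin P N g m. *)
Definition nu_fin (P N : G -> Prop) (g : G) (m : nat) : Prop :=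
  (N g ->
     (exists a, P a /\ (exists n : Z, gzpow a n = g) /\ is_qorder N a m) /\
     (forall a, P a -> (exists n : Z, gzpow a n = g) ->
        exists k, is_qorder N a k /\ (k <= m)%nat)) /\
  (~ N g ->
     (exists a, P a /\ (0 < m)%nat /\ gzpow a (Z.of_nat m) = g) /\
     (forall a (n : Z), P a -> n <> 0%Z -> gzpow a n = g -> (n <= Z.of_nat m)%Z)).

Definition is_min_root (P N : G -> Prop) (g a : G) : Prop :=
  P a /\ exists m, nu_fin P N g m /\
    (N g -> (exists n : Z, gzpow a n = g) /\ is_qorder N a m) /\
    (~ N g -> gzpow a (Z.of_nat m) = g).

Definition setT_g : G -> Prop := fun _ => True.

End Defs.

Arguments setT_g {G}.

(* Main.v *)
Require Import Defs.
From Stdlib Require Import Reals ZArith Arith List Lia Lra.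

Section Aux.
Variable G : group.
Local Notation "x ** y" := (gmul G x y) (at level 40, left associativity).
Local Notation inv := (ginv G).
Local Notation one := (gone G).

Lemma cancel_l (y z : G) : inv y ** (y ** z) = z.
Proof. rewrite gmulA, gmulVl, gmul1l; reflexivity. Qed.



Lemma mulV (x : G) : x ** inv x = one.
Proof.
  rewrite <- (gmul1l G (x ** inv x)).
  rewrite <- (gmulVl G (inv x)) at 1.
  rewrite <- gmulA. rewrite (gmulA _ (inv x) x (inv x)), gmulVl, gmul1l.
  apply gmulVl.
Qed.

Lemma mul1 (x : G) : x ** one = x.
Proof. rewrite <- (gmulVl G x), gmulA, mulV, gmul1l. reflexivity. Qed.

Lemma inv_inv (x : G) : inv (inv x) = x.
Proof.
  rewrite <- (mul1 (inv (inv x))), <- (gmulVl G x), gmulA, gmulVl, gmul1l.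
  reflexivity.
Qed.

Lemma gpow_add (a : G) n m : gpow G a (n + m) = gpow G a n ** gpow G a m.
Proof.
  induction n; simpl. now rewrite gmul1l. now rewrite IHn, gmulA.
Qed.

Lemma gpow_mul (a : G) n m : gpow G a (n * m) = gpow G (gpow G a n) m.
Proof.
  induction m; simpl. now rewrite Nat.mul_0_r.
  rewrite Nat.mul_succ_r, Nat.add_comm, gpow_add, IHm. reflexivity.
Qed.

Lemma gpow_sub (H : G -> Prop) (sH : is_subgroup G H) x q :
  H x -> H (gpow G x q).
Proof.
  destruct sH as [h1 [hm hi]]. intros Hx; induction q; simpl; auto.
Qed.

Lemma qorder_dvd (H : G -> Prop) (sH : is_subgroup G H) a k n :
  is_qorder G H a k -> H (gpow G a n) -> exists q, n = k * q.
Proof.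
  intros [k0 [hk hmin]] hn.
  pose proof (Nat.div_mod n k ltac:(lia)) as E.
  destruct (Nat.eq_dec (n mod k) 0) as [Z|NZ].
  - exists (n / k). lia.
  - exfalso. apply (hmin (n mod k)).
    + pose proof (Nat.mod_upper_bound n k ltac:(lia)). lia.
    + assert (Hr : gpow G a (n mod k) =
              inv (gpow G a (k * (n / k))) ** gpow G a n).
      { replace (gpow G a n) with (gpow G a (k*(n/k) + n mod k)) by (now rewrite <- E).
        rewrite gpow_add, cancel_l. reflexivity. }
      rewrite Hr. pose proof sH as [h1 [hm hi]]. apply hm; auto.
      apply hi. rewrite gpow_mul. apply (gpow_sub H sH); auto.
Qed.

Lemma qorder_le (N : G -> Prop) a k n :
  is_qorder G N a k -> (0 < n)%nat -> N (gpow G a n) -> (k <= n)%nat.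
Proof.
  intros [k0 [hk hmin]] hn hN.
  destruct (le_lt_dec k n); auto. exfalso. apply (hmin n); auto.
Qed.

Lemma qorder_uniq (N : G -> Prop) a k k' :
  is_qorder G N a k -> is_qorder G N a k' -> k = k'.
Proof.
  intros h1 h2. pose proof h1 as [? [? _]]. pose proof h2 as [? [? _]].
  pose proof (qorder_le _ _ _ _ h1 H1 H2).
  pose proof (qorder_le _ _ _ _ h2 H H0). lia.
Qed.


Lemma gzpow_nat (x : G) n : gzpow G x (Z.of_nat n) = gpow G x n.
Proof.
  destruct n; simpl; auto. now rewrite SuccNat2Pos.id_succ.
Qed.

Lemma root_H (H : G -> Prop) (sH : is_subgroup G H) a k n g :
  is_qorder G H a k -> gzpow G a n = g -> H g ->
  exists n', gzpow G (gpow G a k) n' = g.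
Proof.
  intros qk hn hg. pose proof sH as [h1 [hm hi]].
  destruct n as [|p|p]; simpl in hn.
  - exists 0%Z. exact hn.
  - destruct (qorder_dvd H sH a k _ qk ltac:(rewrite hn; exact hg)) as [q Eq].
    exists (Z.of_nat q). rewrite gzpow_nat, <- gpow_mul, <- Eq. exact hn.
  - assert (Hp : H (gpow G a (Pos.to_nat p))).
    { rewrite <- (inv_inv (gpow G a (Pos.to_nat p))), hn. auto. }
    destruct (qorder_dvd H sH a k _ qk Hp) as [q Eq].
    exists (- Z.of_nat q)%Z. destruct q as [|q].
    + lia.
    + simpl. rewrite SuccNat2Pos.id_succ, <- gpow_mul, <- Eq. exact hn.
Qed.

End Aux.

Theorem mainTheorem13 (G : group) (H K : G -> Prop)
  (nH : is_normal_in G setT_g H) (fiH : finite_index G H)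
  (nK : is_normal_in G setT_g K) (g : G) (Hg : H g) (a : G)
  (amin : is_min_root G setT_g K g a) :
  forall (m k : nat),
    nu_fin G setT_g K g m ->          (* m = nu(g; G, K) *)
    is_qorder G H a k ->              (* k = o(psi(a), G/H) *)
    forall v : nat,
      nu_fin G H (fun x => K x /\ H x) g v ->   (* v = nu(g; H, K cap H), if finite *)
      (INR m / INR k <= INR v)%R.
Proof.
  intros m k num qk v nuv.
  destruct nH as [sH _].
  assert (kpos : (0 < k)%nat) by (destruct qk; auto).
  assert (Hb : H (gpow G a k)) by (destruct qk as [_ [? _]]; auto).
  set (b := gpow G a k) in *.
  assert (key : (m <= k * v)%nat).
  { destruct amin as [_ [m' [num' [hK hnK]]]].
    destruct (Classical_Prop.classic (K g)) as [Kg|nKg].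
    - destruct num as [[[a0 [_ [r0 q0]]] _] _]. auto.
      destruct num' as [[_ bnd'] _]. auto.
      destruct (bnd' a0 I r0) as [k0 [qk0 hk0]].
      pose proof (qorder_uniq G _ _ _ _ q0 qk0). subst k0.
      destruct (hK Kg) as [[n hn] qam].
      destruct (root_H G H sH a k n g qk hn Hg) as [n' hn'].
      destruct nuv as [[_ bv] _]. auto.
      destruct (bv b Hb (ex_intro _ n' hn')) as [k' [qk' hk']].
      pose proof qk' as [k'pos [[Kk' _] _]].
      unfold b in Kk'. rewrite <- gpow_mul in Kk'.
      pose proof (qorder_le G _ _ _ (k*k') qam ltac:(nia) Kk').
      nia.
    - destruct num as [_ [[a0 [_ [m0 r0]]] _]]. auto.
      destruct num' as [_ [[a1 [_ [m'pos _]]] bnd']]. auto.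
      pose proof (bnd' a0 (Z.of_nat m) I ltac:(lia) r0).
      pose proof (hnK nKg) as r. rewrite gzpow_nat in r.
      assert (Hm' : H (gpow G a m')) by (rewrite r; exact Hg).
      destruct (qorder_dvd G H sH a k m' qk Hm') as [q Eq].
      destruct nuv as [_ [_ bv]]. tauto.
      assert (Eb : gzpow G b (Z.of_nat q) = g) by
        (unfold b; rewrite gzpow_nat, <- gpow_mul, <- Eq; exact r).
      pose proof (bv b (Z.of_nat q) Hb ltac:(nia) Eb).
      nia. }
  assert (INR m <= INR k * INR v)%R by (rewrite <- mult_INR; apply le_INR; auto).
  assert (0 < INR k)%R by (apply lt_0_INR; auto).
  unfold Rdiv. apply (Rmult_le_reg_r (INR k)); auto.
  rewrite Rmult_assoc, Rinv_l by lra. lra.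
Qed.
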